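(* Let $a\in\mathcal{Z}=\prod_{p\in\mathcal{P}}\mathbb{Z}_p$. The following are equivalent: (1) $a$ is not a zero divisor in $\mathcal{Z}$; (2) $a_p\neq0$ for every $p\in\mathcal{P}$; (3) the set $\mathbb{Q}^*_+a\cap\mathcal{Z}$ is dense in $\mathcal{Z}$.
   Context: $\mathcal{P}$ is the set of primes, $\mathbb{Z}_p$ the $p$-adic integers; $\mathcal{Z}=\prod_p\mathbb{Z}_p$ is a ring under componentwise operations with the product topology, viewed inside the finite adeles $\mathcal{A}_f$, where $\mathbb{Q}^*_+$ acts by multiplication via the diagonal embedding $r\mapsto(r)_{p}$. *)

(* Defs.v *)
From HB Require Import structures.
From mathcomp Require Import all_boot all_order all_algebra.
From mathcomp Require Import all_classical all_reals all_analysis.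
Set Implicit Arguments. Unset Strict Implicit. Unset Printing Implicit Defensive.
Local Open Scope classical_set_scope.

(* The p-adic integers Z_p, realized as the inverse limit of the Z/p^n:
   an element is the sequence of its residues x_n = x mod p^n (as naturals
   in [0, p^n)), with x_{n+1} mod p^n = x_n.  The topology is the inverse
   limit topology, i.e. the subspace topology inside the product of the
   discrete spaces Z/p^n (here: discrete nat), which is the p-adic topology. *)
Definition padic_seq (p : nat) : set {ptws nat -> nat} :=
  [set f | forall n : nat, (f n.+1 %% p ^ n = f n)%N].

Definition Zp (p : nat) : topologicalType := set_type (padic_seq p).

Definition Zp_digits (p : nat) (x : Zp p) : nat -> nat := set_val x.

Lemma padic_seq_mul (p : nat) (x y : Zp p) :
  padic_seq p (fun n => (Zp_digits x n * Zp_digits y n) %% p ^ n)%N.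
Proof.
move=> n /=.
have hx : (Zp_digits x n.+1 %% p ^ n = Zp_digits x n)%N.
  rewrite /Zp_digits; case: x => f hf; exact: (set_mem hf).
have hy : (Zp_digits y n.+1 %% p ^ n = Zp_digits y n)%N.
  rewrite /Zp_digits; case: y => f hf; exact: (set_mem hf).
rewrite modn_dvdm; last by rewrite expnS dvdn_mull.
by rewrite -hx -hy modnMm.
Qed.

Lemma padic_seq_nat (p k : nat) : padic_seq p (fun n => k %% p ^ n)%N.
Proof. by move=> n /=; rewrite modn_dvdm // expnS dvdn_mull. Qed.

Definition Zp_mul (p : nat) (x y : Zp p) : Zp p :=
  @exist _ (fun f => f \in padic_seq p) _ (mem_set (padic_seq_mul x y)).

Definition Zp_nat (p : nat) (k : nat) : Zp p :=
  @exist _ (fun f => f \in padic_seq p) _ (mem_set (padic_seq_nat p k)).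

Definition Zp_zero (p : nat) : Zp p := Zp_nat p 0.

Definition Prime := {p : nat | prime p}.

Definition Zhat : topologicalType := prod_topology (fun p : Prime => Zp (val p)).

Definition Zhat_mul (a b : Zhat) : Zhat := fun p => Zp_mul (a p) (b p).
Definition Zhat_nat (k : nat) : Zhat := fun p => Zp_nat (val p) k.
Definition Zhat_zero : Zhat := Zhat_nat 0.

Definition zero_divisor (a : Zhat) : Prop :=
  exists b : Zhat, b <> Zhat_zero /\ Zhat_mul a b = Zhat_zero.

(* Q*_+ a ∩ Zhat : the elements b of Zhat with b = (m/n) a in the finite
   adeles for some positive rational m/n; since the finite adeles are
   torsion free, b = (m/n) a  <->  n b = m a  (n, m positive integers). *)
Definition Qpos_orbit_cap_Zhat (a : Zhat) : set Zhat :=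
  [set b | exists m n : nat, (0 < m)%N /\ (0 < n)%N /\
           Zhat_mul (Zhat_nat n) b = Zhat_mul (Zhat_nat m) a].

(* Main.v *)
Require Import Defs.
From HB Require Import structures.
From mathcomp Require Import all_boot all_order all_algebra.
From mathcomp Require Import all_classical all_reals all_analysis.
Local Open Scope classical_set_scope.
From mathcomp Require Import zify.
Notation ZP := Defs.Zp.
Notation Zp_mul := Defs.Zp_mul.
Notation Zp_nat := Defs.Zp_nat.

Section ZpBasics.
Variable p : nat.
Hypothesis pp : prime p.
Local Notation d := (@Zp_digits p).

Lemma p_gt0 : (0 < p)%N. Proof. exact: prime_gt0. Qed.
Lemma pX_gt0 k : (0 < p ^ k)%N. Proof. by rewrite expn_gt0 p_gt0. Qed.

Lemma dig_compat (x : ZP p) n : (d x n.+1 %% p ^ n)%N = d x n.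
Proof. rewrite /Zp_digits; case: x => f hf /=; exact: (set_mem hf). Qed.

Lemma dig_compat_le (x : ZP p) k L : (k <= L)%N -> (d x L %% p ^ k)%N = d x k.
Proof.
move=> /subnK <-; elim: (L - k)%N => [|i IH]; first by rewrite add0n -(dig_compat x k) modn_mod.
rewrite addSn -IH -(dig_compat x (i + k)) modn_dvdm //.
by apply: dvdn_exp2l; rewrite leq_addl.
Qed.

Lemma dig_lt (x : ZP p) k : (d x k < p ^ k)%N.
Proof. by rewrite -(dig_compat x k) ltn_pmod // pX_gt0. Qed.

Lemma Zp_ext (x y : ZP p) : (forall k, d x k = d y k) -> x = y.
Proof.
move=> H; case: x y H => f hf [g hg] /= H.
have efg : f = g by apply/funext => k; exact: H.
subst g; congr exist; exact: Prop_irrelevance.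
Qed.

Lemma dig_mul (x y : ZP p) k : d (Zp_mul x y) k = (d x k * d y k %% p ^ k)%N.
Proof. by []. Qed.

Lemma dig_nat k' k : d (Zp_nat p k') k = (k' %% p ^ k)%N.
Proof. by []. Qed.

Lemma dig_zero k : d (Zp_zero p) k = 0%N.
Proof. by rewrite /Zp_zero dig_nat mod0n. Qed.

Lemma nonzero_dig (x : ZP p) : x <> Zp_zero p -> exists N, d x N <> 0%N.
Proof.
move=> hx; apply: contrapT => hN; apply: hx; apply: Zp_ext => k.
rewrite dig_zero; apply: contrapT => hk; apply: hN; by exists k.
Qed.

Lemma ndvd_dig (x : ZP p) N n : d x N <> 0%N -> (N <= n)%N -> ~~ (p ^ N %| d x n).
Proof.
move=> hN le; apply/negP => /dvdnP [q hq].
apply: hN; by rewrite -(@dig_compat_le x N n le) hq modnMl.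
Qed.

Lemma Zp_domain (x y : ZP p) : x <> Zp_zero p -> y <> Zp_zero p -> Zp_mul x y <> Zp_zero p.
Proof.
move=> /nonzero_dig [N hN] /nonzero_dig [M hM] hxy.
have h1 : d (Zp_mul x y) (N + M) = d (Zp_zero p) (N + M) by rewrite hxy.
rewrite dig_mul dig_zero in h1; move/eqP: h1; rewrite -/(dvdn _ _).
have hx := @ndvd_dig x N (N+M) hN (leq_addr M N).
have hy := @ndvd_dig y M (N+M) hM (leq_addl N M).
have x0 : (0 < d x (N + M))%N by case: (d x (N+M)) hx => //; rewrite dvdn0.
have y0 : (0 < d y (N + M))%N by case: (d y (N+M)) hy => //; rewrite dvdn0.
rewrite pfactor_dvdn ?muln_gt0 ?x0 ?y0 // lognM //.
rewrite pfactor_dvdn // -ltnNge in hx; rewrite pfactor_dvdn // -ltnNge in hy.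
move=> h; have := leq_add hx hy; rewrite addnS addSn => h2.
have h3 := leq_trans h2 h.
by rewrite ltnNge leqnSn in h3.
Qed.


Lemma Zp_nat_neq0 k : (0 < k)%N -> Zp_nat p k <> Zp_zero p.
Proof.
move=> k0 h; have := congr1 (fun z => d z k) h; rewrite /= dig_nat dig_zero.
have hk : (k < p ^ k)%N by apply: ltn_expl; exact: prime_gt1.
rewrite modn_small // => k00; by rewrite k00 in k0.
Qed.

Lemma inv_mod u M : (0 < u)%N -> coprime u M -> exists i, (i * u = 1 %[mod M])%N.
Proof.
move=> u0 cop; case: (egcdnP M u0) => km kn def _.
by exists km; rewrite def (eqP cop) modnMDl.
Qed.

Lemma inv_unique u M i j : (i * u = 1 %[mod M])%N -> (j * u = 1 %[mod M])%N ->
  (i = j %[mod M])%N.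
Proof.
move=> hi hj.
rewrite -(muln1 i) -modnMmr -hj modnMmr mulnA (mulnC i j) -mulnA.
by rewrite -modnMmr hi modnMmr muln1.
Qed.

Lemma Zp_div (z : ZP p) e u : (0 < u)%N -> coprime u p ->
  (forall k, p ^ e %| d z (k + e))%N ->
  exists y : ZP p, Zp_mul (Zp_nat p (p ^ e * u)) y = z.
Proof.
move=> u0 cop hdiv.
pose i k := (egcdn u (p ^ k)).1.
have hi k : (i k * u = 1 %[mod p ^ k])%N.
  rewrite /i; case: (egcdnP (p ^ k) u0) => km kn def _ /=.
  by rewrite def (eqP (coprimeXr k cop)) modnMDl.
pose w k := (d z (k + e) %/ p ^ e)%N.
have hw k : (w k.+1 = w k %[mod p ^ k])%N.
  rewrite /w; set Z1 := d z (k.+1 + e); set Z0 := d z (k + e).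
  have : Z1 = (Z1 %/ p ^ (k + e) * p ^ (k + e) + Z0)%N.
    rewrite {1}(divn_eq Z1 (p ^ (k + e))); congr (_ + _)%N.
    by rewrite /Z1 /Z0 addSn dig_compat.
  move=> ->; rewrite expnD mulnA divnMDl ?pX_gt0 //.
  by rewrite modnMDl.
have hik k : (i k.+1 = i k %[mod p ^ k])%N.
  apply: inv_unique (hi k).
  have := hi k.+1; move/(congr1 (fun t => t %% p ^ k)%N).
  by rewrite !modn_dvdm // dvdn_exp2l.
pose ys k := ((w k * i k) %% p ^ k)%N.
have hys : padic_seq p ys.
  move=> k /=; rewrite /ys modn_dvdm ?dvdn_exp2l //.
  by rewrite -modnMm hw hik modnMm.
exists (exist (fun f => f \in padic_seq p) ys (mem_set hys)).
apply: Zp_ext => k; rewrite dig_mul dig_nat /Zp_digits /= -/(Zp_digits z k).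
rewrite /ys modnMm.
rewrite (_ : (p ^ e * u * (w k * i k)) = (p ^ e * w k) * (i k * u))%N; last first.
  by rewrite -!mulnA; congr (_ * _)%N; rewrite mulnCA (mulnC u).
rewrite -modnMmr hi modnMmr muln1.
rewrite /w mulnC divnK ?hdiv //.
exact: dig_compat_le (leq_addr e k).
Qed.
End ZpBasics.

Lemma dvd_mod_iff d M X : (d %| M)%N -> (d %| X %% M)%N = (d %| X)%N.
Proof. by move=> dM; rewrite /dvdn modn_dvdm. Qed.

Lemma coprime_prodl_seq (s : seq nat) (P : pred nat) (F : nat -> nat) q :
  (forall i, i \in s -> P i -> coprime (F i) q) -> coprime (\prod_(i <- s | P i) F i) q.
Proof.
move=> H; rewrite big_seq_cond; apply: (big_ind (fun x => coprime x q)).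
- exact: coprime1n.
- by move=> x y hx hy; rewrite coprimeMl hx hy.
- by move=> i /andP [hi hP]; exact: H.
Qed.

Lemma coprime_primes_ne p q k l : prime p -> prime q -> p != q -> coprime (p ^ k) (q ^ l).
Proof.
move=> pp pq ne; apply: coprimeXl; apply: coprimeXr.
by rewrite prime_coprime // dvdn_prime2.
Qed.

Lemma dvdn_prod_seq (s : seq nat) (F : nat -> nat) j : uniq s -> j \in s ->
  (F j %| \prod_(i <- s) F i)%N.
Proof. by move=> us js; rewrite (bigD1_seq j) //= dvdn_mulr. Qed.

Lemma crt_seq (s : seq nat) (M r : nat -> nat) : uniq s ->
  (forall i j, i \in s -> j \in s -> i != j -> coprime (M i) (M j)) ->
  exists x, forall i, i \in s -> (x = r i %[mod M i])%N.
Proof.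
elim: s => [|i s IH] /=; first by move=> _ _; exists 0%N.
move=> /andP [nis us] hc.
have [x' hx'] : exists x', forall j, j \in s -> (x' = r j %[mod M j])%N.
  apply: IH => // a b ha hb; apply: hc; by rewrite inE ?ha ?hb orbT.
have cop : coprime (M i) (\prod_(j <- s) M j).
  rewrite coprime_sym; rewrite -(big_filter s predT) ; apply: coprime_prodl_seq => j.
  rewrite mem_filter /= => js _; apply: hc; rewrite ?inE ?js ?eqxx ?orbT //.
  by apply/eqP => ej; rewrite -ej js in nis.
exists (chinese (M i) (\prod_(j <- s) M j) (r i) x') => j; rewrite inE => /orP [/eqP ->|js].
  exact: chinese_modl.
have dj := @dvdn_prod_seq s M j us js.
rewrite -hx' // -[LHS](modn_dvdm _ dj) chinese_modr // modn_dvdm //.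
Qed.

Lemma exists_bound (s : seq nat) (P : nat -> nat -> Prop) :
  (forall p, p \in s -> exists N, forall L, (N <= L)%N -> P p L) ->
  exists V, forall p, p \in s -> forall L, (V <= L)%N -> P p L.
Proof.
elim: s => [|i s IH] H; first by exists 0%N.
have [N hN] := H i (mem_head i s).
have [V hV] : exists V, forall p, p \in s -> forall L, (V <= L)%N -> P p L.
  by apply: IH => p ps; apply: H; rewrite inE ps orbT.
exists (maxn N V) => p; rewrite inE => /orP [/eqP ->|ps] L; rewrite geq_max => /andP [h1 h2].
  exact: hN.
exact: hV.
Qed.
Lemma digit_cont (p : Prime) (k : nat) : continuous (fun a : Zhat => Zp_digits (a p) k).
Proof.
have h1 : continuous (fun a : Zhat => a p).
  have := (@proj_continuous Prime (fun p => ZP (val p)) p).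
  exact.
have h2 : continuous (fun x : ZP (val p) => set_val x : {ptws nat -> nat}).
  exact: initial_continuous.
have h3 : continuous (fun f : {ptws nat -> nat} => f k).
  exact: (@proj_continuous nat (fun _ => nat) k).
move=> x; exact: (continuous_comp (h1 x) (continuous_comp (h2 _) (h3 _))).
Qed.
Lemma initial_cvg_ {S : choiceType} {T : topologicalType} (f : S -> T)
  (F : set_system S) (FF : Filter F) (s : initial_topology f) :
  f @ F --> f s -> F --> s.
Proof.
move=> cf U [?/= [[W oW <-]]] /= Wsfz /filterS; apply; apply: cf.
exact: open_nbhs_nbhs.
Qed.

Lemma cvg_Zhat (b : nat -> Zhat) (c : Zhat) :
  (forall p k, \forall j \near \oo, Zp_digits (b j p) k = Zp_digits (c p) k) ->
  b @ \oo --> c.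
Proof.
move=> H.
apply/cvg_sup => p.
apply: initial_cvg_.
apply: initial_cvg_.
apply/pointwise_cvgP => k.
move=> U /= hU.
have := H p k; apply: filterS => j /= E.
rewrite /Zp_digits in E; rewrite E.
by move: hU; rewrite /nbhs /= /principal_filter /globally /=; apply.
Qed.
Definition dig (x : Zhat) (p k : nat) : nat :=
  if @insub nat prime {p : nat | prime p} p is Some q then Zp_digits (x q) k else 0%N.

Lemma digE (x : Zhat) (q : Prime) k : dig x (val q) k = Zp_digits (x q) k.
Proof. by rewrite /dig valK. Qed.

Section Core.
Variables (a c : Zhat).
Hypothesis ha : forall q : Prime, a q <> Zp_zero (val q).

Lemma core J : exists b : Zhat, Qpos_orbit_cap_Zhat a b /\
  forall q : Prime, (val q < J)%N -> Zp_digits (b q) J = Zp_digits (c q) J.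
Proof.
pose P := [seq p <- iota 0 J | prime p].
have uP : uniq P by rewrite filter_uniq // iota_uniq.
have memP p : (p \in P) = prime p && (p < J)%N by rewrite mem_filter mem_iota add0n.
have [V hV] : exists V, forall p, p \in P -> forall L, (V <= L)%N -> dig a p L <> 0%N.
  apply: exists_bound => p; rewrite memP => /andP [pp _].
  pose q : Prime := exist _ p pp.
  have [N hN] := @nonzero_dig _ (a q) (ha q).
  exists N => L NL; have -> : dig a p L = Zp_digits (a q) L := digE a q L.
  move=> h0; apply: hN; by rewrite -(@dig_compat_le _ (a q) _ _ NL) h0 mod0n.
have Pprime p : p \in P -> prime p by rewrite memP => /andP [].
have digLt p k : p \in P -> (dig a p k < p ^ k)%N.
  move=> /Pprime pp; have -> : dig a p k = Zp_digits (a (exist _ p pp)) k := digE a (exist _ p pp) k.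
  exact: dig_lt.
have digCompat p k L : p \in P -> (k <= L)%N -> (dig a p L %% p ^ k)%N = dig a p k.
  move=> /Pprime pp; have e := digE a (exist _ p pp); rewrite /= in e.
  rewrite !e; exact: dig_compat_le.
pose v p := logn p (dig a p V).
have dV0 p : p \in P -> (0 < dig a p V)%N.
  by move=> pP; rewrite lt0n; apply/eqP; apply: hV.
have hvV p : p \in P -> (v p < V)%N.
  move=> pP; rewrite -(ltn_exp2l _ _ (prime_gt1 (Pprime p pP))).
  apply: leq_ltn_trans (digLt p V pP).
  exact: dvdn_leq (dV0 p pP) (pfactor_dvdnn _ _).
have hF1 p L : p \in P -> (v p <= L)%N -> (p ^ v p %| dig a p L)%N.
  move=> pP vL.
  have h1 : (p ^ v p %| dig a p (L + V))%N.
    rewrite -(@dvd_mod_iff _ _ (dig a p (L + V)) (dvdn_exp2l p (ltnW (hvV p pP)))).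
    by rewrite digCompat ?leq_addl // pfactor_dvdnn.
  by rewrite -(digCompat p L (L + V)) ?leq_addr // dvd_mod_iff // dvdn_exp2l.
pose L0 := (J + V)%N.
pose al p := (dig a p L0 %/ p ^ v p)%N.
have hF3 p : p \in P -> dig a p L0 = (p ^ v p * al p)%N.
  move=> pP; rewrite /al mulnC divnK //; apply: hF1 => //.
  by apply: leq_trans (ltnW (hvV p pP)) (leq_addl J V).
have hal0 p : p \in P -> (0 < al p)%N.
  move=> pP; have := hV p pP L0 (leq_addl J V); rewrite hF3 //.
  by case: (al p) => //; rewrite muln0.
have hF2 p : p \in P -> coprime (al p) p.
  move=> pP; rewrite coprime_sym prime_coprime ?Pprime //; apply/negP => hd.
  have h1 : (p ^ (v p).+1 %| dig a p L0)%N by rewrite hF3 // expnSr dvdn_pmul2l ?pX_gt0 ?Pprime.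
  have h2 : (p ^ (v p).+1 %| dig a p V)%N.
    rewrite -(digCompat p V L0) ?leq_addl // dvd_mod_iff // dvdn_exp2l //.
    exact: hvV.
  move: h2; rewrite pfactor_dvdn ?Pprime ?dV0 // ltnn //.
pose u q := (\prod_(p <- P | p != q) p ^ v p)%N.
pose e q := if q \in P then v q else 0%N.
pose n := (\prod_(p <- P) p ^ v p)%N.
have hdec q : prime q -> n = (q ^ e q * u q)%N.
  move=> qp; rewrite /n /e /u; case: (boolP (q \in P)) => qP.
    by rewrite (bigD1_seq q) //=.
  rewrite expn0 mul1n big_seq_cond [in RHS]big_seq_cond; apply: eq_bigl => p.
  case: (boolP (p \in P)) => //= pP; apply/esym/eqP => epq.
  by rewrite -epq pP in qP.
have hucop q : prime q -> coprime (u q) q.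
  move=> qp; apply: coprime_prodl_seq => p pP pq.
  rewrite -(expn1 q); apply: coprime_primes_ne => //; exact: Pprime.
have hu0 q : (0 < u q)%N.
  rewrite /u big_seq_cond; apply: (big_ind (fun x => 0 < x)%N) => //.
    by move=> x y x0 y0; rewrite muln_gt0 x0 y0.
  by move=> p /andP [pP _]; rewrite expn_gt0 prime_gt0 ?Pprime.
have n0 : (0 < n)%N.
  rewrite /n big_seq; apply: (big_ind (fun x => 0 < x)%N) => //.
    by move=> x y x0 y0; rewrite muln_gt0 x0 y0.
  by move=> p pP; rewrite expn_gt0 prime_gt0 ?Pprime.
pose be p := (egcdn (al p) (p ^ J)).1.
have hbe p : p \in P -> (be p * al p = 1 %[mod p ^ J])%N.
  move=> pP; rewrite /be; case: (egcdnP (p ^ J) (hal0 p pP)) => km kn def _ /=.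
  by rewrite def (eqP (coprimeXr J (hF2 p pP))) modnMDl.
pose r p := (u p * dig c p J * be p)%N.
have [x hx] : exists x, forall p, p \in P -> (x = r p %[mod p ^ J])%N.
  apply: crt_seq => // p q pP qP pq; apply: coprime_primes_ne => //; exact: Pprime.
pose m := (x + \prod_(p <- P) p ^ J)%N.
have m0 : (0 < m)%N.
  rewrite /m addn_gt0; apply/orP; right.
  rewrite big_seq; apply: (big_ind (fun x => 0 < x)%N) => //.
    by move=> y z y0 z0; rewrite muln_gt0 y0 z0.
  by move=> p pP; rewrite expn_gt0 prime_gt0 ?Pprime.
have hm p : p \in P -> (m = r p %[mod p ^ J])%N.
  move=> pP; rewrite /m (bigD1_seq p) //= -modnDm modnMr addn0 modn_mod hx //.
have hb (q : Prime) : exists y : ZP (val q),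
    Zp_mul (Zp_nat (val q) n) y = Zp_mul (Zp_nat (val q) m) (a q).
  have qp : prime (val q) := valP q.
  rewrite (hdec _ qp); apply: Zp_div => //; first exact: hucop.
  move=> k; rewrite dig_mul dig_nat dvd_mod_iff ?dvdn_exp2l ?leq_addl //.
  apply: dvdn_mull; rewrite /e; case: (boolP (val q \in P)) => qP; last by rewrite expn0 dvd1n.
  rewrite -digE; apply: hF1 => //; exact: leq_addl.
pose b : Zhat := fun q => proj1_sig (cid (hb q)).
exists b; split.
  exists m, n; split => //; split => //.
  apply: functional_extensionality_dep => q.
  exact: (proj2_sig (cid (hb q))).
move=> q qJ.
have qp : prime (val q) := valP q.
have pP : val q \in P by rewrite memP qp qJ.
have hbq : Zp_mul (Zp_nat _ n) (b q) = Zp_mul (Zp_nat _ m) (a q) := proj2_sig (cid (hb q)).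
have E := congr1 (fun z => Zp_digits z L0) hbq.
rewrite /= !dig_mul !dig_nat !modnMml in E.
rewrite -(digE a q L0) (hF3 _ pP) (hdec _ qp) /e pP in E.
rewrite -mulnA (mulnCA m) in E.
have vL0 : (v (val q) <= L0)%N by apply: leq_trans (ltnW (hvV _ pP)) (leq_addl J V).
have hL : (val q ^ L0 = val q ^ v (val q) * val q ^ (L0 - v (val q)))%N by rewrite -expnD subnKC.
rewrite hL -!muln_modr in E; move/eqP: E; rewrite eqn_pmul2l ?pX_gt0 // => /eqP E.
have dJ : (val q ^ J %| val q ^ (L0 - v (val q)))%N.
  rewrite dvdn_exp2l // /L0 -addnBA ?leq_addr //; exact: ltnW (hvV _ pP).
have E2 : ((u (val q) * Zp_digits (b q) J) %% val q ^ J = (m * al (val q)) %% val q ^ J)%N.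
  have E1 : ((u (val q) * Zp_digits (b q) L0) %% val q ^ J = (m * al (val q)) %% val q ^ J)%N.
    by rewrite -(modn_dvdm (u (val q) * Zp_digits (b q) L0) dJ) E modn_dvdm.
  by rewrite -E1 -[in RHS]modnMmr (@dig_compat_le _ (b q) J L0 (leq_addr V J)).
have E3 : ((u (val q) * Zp_digits (b q) J) %% val q ^ J = (u (val q) * Zp_digits (c q) J) %% val q ^ J)%N.
  rewrite E2 -modnMml hm // modnMml /r -mulnA -modnMmr hbe // modnMmr muln1.
  by rewrite digE.
have [g hg] := @inv_mod _ _ (hu0 (val q)) (coprimeXr J (hucop _ qp)).
have E4 : (Zp_digits (b q) J %% val q ^ J = Zp_digits (c q) J %% val q ^ J)%N.
  rewrite -(mul1n (Zp_digits (b q) J)) -modnMml -hg modnMml -mulnA -modnMmr E3.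
  by rewrite modnMmr mulnA -modnMml hg modnMml mul1n.
by rewrite !modn_small in E4 => //; apply: dig_lt.
Qed.
End Core.
Theorem lemma2p9 (a : Zhat) :
  (~ zero_divisor a <-> (forall p : Prime, a p <> Zp_zero (val p))) /\
  ((forall p : Prime, a p <> Zp_zero (val p)) <-> dense (Qpos_orbit_cap_Zhat a)).
Proof.
have Zmul0 (q : Prime) (x : ZP (val q)) : Zp_mul (Zp_zero (val q)) x = Zp_zero (val q).
  by apply: Zp_ext => k; rewrite dig_mul /Zp_zero !dig_nat mod0n mul0n mod0n.
have Zmul0r (q : Prime) (x : ZP (val q)) : Zp_mul x (Zp_zero (val q)) = Zp_zero (val q).
  by apply: Zp_ext => k; rewrite dig_mul /Zp_zero !dig_nat mod0n muln0 mod0n.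
split; split.
- move=> nzd p ap0; apply: nzd.
  exists (fun q : Prime => if q == p then Zp_nat (val q) 1 else Zp_zero (val q)); split.
    move=> hb; have := congr1 (fun z : Zhat => Zp_digits (z p) 1) hb.
    rewrite /= eqxx /Zhat_zero /Zhat_nat !dig_nat mod0n expn1 modn_small //.
    exact: prime_gt1 (valP p).
  apply: functional_extensionality_dep => q; rewrite /Zhat_mul.
  case: eqP => [->|_]; first by rewrite ap0 Zmul0.
  exact: Zmul0r.
- move=> H [b [bn0 hab]].
  have [q bq] : exists q : Prime, b q <> Zp_zero (val q).
    apply: contrapT => hn; apply: bn0; apply: functional_extensionality_dep => q.
    apply: contrapT => hq; apply: hn; by exists q.
  have qp : prime (val q) := valP q.
  have := congr1 (fun z : Zhat => z q) hab; rewrite /Zhat_mul /Zhat_zero /Zhat_nat /=.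
  exact: (@Zp_domain _ qp _ _ (H q) bq).
- move=> H O [c Oc] oO.
  pose bs (J : nat) : Zhat := proj1_sig (cid (@core a c H J)).
  have hbs J : Qpos_orbit_cap_Zhat a (bs J) /\ forall q : Prime, (val q < J)%N ->
      Zp_digits (bs J q) J = Zp_digits (c q) J := proj2_sig (cid (@core a c H J)).
  have cv : bs @ \oo --> c.
    apply: cvg_Zhat => p k; exists (maxn (val p).+1 k) => // j /=; rewrite geq_max => /andP [pj kj].
    rewrite -(@dig_compat_le _ (bs j p) _ _ kj) -(@dig_compat_le _ (c p) _ _ kj).
    by rewrite (proj2 (hbs j) p pj).
  have nO : nbhs c O by apply: open_nbhs_nbhs.
  have [N _ hN] := cv O nO.
  exists (bs N); split; first by apply: hN => /=.
  exact: (proj1 (hbs N)).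
- move=> hd p ap0.
  pose O := [set z : Zhat | Zp_digits (z p) 1 = 1%N].
  have [z [Oz [m [n [m0 [n0 hz]]]]]] : O `&` Qpos_orbit_cap_Zhat a !=set0.
    apply: hd.
      exists (Zhat_nat 1); rewrite /O /= /Zhat_nat dig_nat expn1 modn_small //.
      exact: prime_gt1 (valP p).
    apply: (@open_comp _ _ (fun z : Zhat => Zp_digits (z p) 1) [set 1%N]).
      by move=> x _; exact: digit_cont.
    exact: discrete_open.
  have := congr1 (fun w : Zhat => w p) hz; rewrite /Zhat_mul /Zhat_nat ap0 Zmul0r => hzp.
  have zp0 : z p = Zp_zero (val p).
    apply: contrapT => hzp0.
    have pp : prime (val p) := valP p.
    exact: (@Zp_domain _ pp _ _ (@Zp_nat_neq0 _ pp _ n0) hzp0 hzp).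
  by move: Oz; rewrite /O /= zp0 dig_nat mod0n.
Qed.
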